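(* Let $S,T$ be totally ordered sets and $M\colon S\times T\to\mathbf{Vec}$ pointwise finite-dimensional and middle exact. Let $s\in S$, $t\in T$, and let $J_S\subseteq S$, $J_T\subseteq T$ be intervals. (1) Suppose some element of $T\setminus J_T$ is an upper bound of $J_T$. Then every monomorphism $h\colon k_{\{s\}\times J_T}\hookrightarrow M|_{\{s\}\times T}$ (of modules over $\{s\}\times T$) extends to a monomorphism $k_{(-\infty,s]\times J_T}\hookrightarrow M|_{(-\infty,s]\times T}$ (of modules over $(-\infty,s]\times T$) whose restriction to $\{s\}\times T$ is $h$. (2) Suppose some element of $S\setminus J_S$ is an upper bound of $J_S$. Then every monomorphism $h\colon k_{J_S\times\{t\}}\hookrightarrow M|_{S\times\{t\}}$ extends to a monomorphism $k_{J_S\times(-\infty,t]}\hookrightarrow M|_{S\times(-\infty,t]}$ whose restriction to $S\times\{t\}$ is $h$.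
   Context: $S\times T$ has the product order. $(-\infty,s]=\{r\in S:r\le s\}$, similarly in $T$. $M$ is middle exact if for all $x\le x'$ in $S$, $y\le y'$ in $T$, with $a=(x,y)$, $b=(x,y')$, $c=(x',y)$, $d=(x',y')$, the sequence $M_a\xrightarrow{(M(a\le b),M(a\le c))}M_b\oplus M_c\xrightarrow{M(b\le d)-M(c\le d)}M_d$ is exact at the middle. Intervals in a totally ordered set are non-empty convex subsets. For a subset $B$ of a poset $Q$, $k_B$ is the module over $Q$ equal to $k$ on $B$, $0$ elsewhere, with identity maps between points of $B$ and zero maps otherwise; $M|_Q$ is the restriction of $M$ to $Q$. *)

(* Defs.v *)
From HB Require Import structures.
From mathcomp Require Import all_boot all_order all_algebra.
Set Implicit Arguments. Unset Strict Implicit. Unset Printing Implicit Defensive.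
Import Order.TTheory GRing.Theory.
Local Open Scope ring_scope.
Local Open Scope order_scope.

(* Persistence modules over a poset P with values in finite-dimensional
   k-vector spaces (vectType k), given by a family of spaces V p and a family of
   linear maps f p q : V p -> V q (only meaningful when p <= q). *)

Definition is_pmod_on (k : fieldType) d (P : porderType d) (A : pred P)
  (V : P -> vectType k) (f : forall p q : P, 'Hom(V p, V q)) : Prop :=
  (forall p (v : V p), p \in A -> f p p v = v) /\
  (forall p q r (v : V p), p \in A -> q \in A -> r \in A ->
     p <= q -> q <= r -> f p r v = f q r (f p q v)).

Definition middle_exact (k : fieldType) dS dT (S : orderType dS) (T : orderType dT)
  (M : S *p T -> vectType k) (f : forall p q : S *p T, 'Hom(M p, M q)) : Prop :=
  forall (x x' : S) (y y' : T), x <= x' -> y <= y' ->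
    (* composite M_a -> M_b (+) M_c -> M_d is zero (image in kernel) *)
    (forall va : M (x, y),
        (f (x, y') (x', y') (f (x, y) (x, y') va)
         - f (x', y) (x', y') (f (x, y) (x', y) va) = 0)%R) /\
    (* kernel in image *)
    (forall (vb : M (x, y')) (vc : M (x', y)),
        (f (x, y') (x', y') vb - f (x', y) (x', y') vc = 0)%R ->
        exists va : M (x, y),
          f (x, y) (x, y') va = vb /\ f (x, y) (x', y) va = vc).

Definition is_interval d (T : orderType d) (J : pred T) : Prop :=
  (exists t, t \in J) /\
  (forall a b c : T, a \in J -> c \in J -> a <= b -> b <= c -> b \in J).

(* Interval module k_B over P: k (= 'rV_1) on B, 0 (= 'rV_0) elsewhere;
   identity maps between points of B, zero maps otherwise. *)
Definition ivV (k : fieldType) d (P : porderType d) (B : pred P) (p : P) : vectType k :=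
  'rV[k]_(p \in B).

Definition ivf (k : fieldType) d (P : porderType d) (B : pred P) (p q : P)
  : 'Hom(ivV k B p, ivV k B q) :=
  linfun (fun v : 'rV[k]_(p \in B) =>
            v *m (pid_mx ((p \in B) && (q \in B)) : 'M[k]_(p \in B, q \in B))).

Definition nat_on (k : fieldType) d (P : porderType d) (A : pred P)
  (V W : P -> vectType k) (fV : forall p q, 'Hom(V p, V q))
  (fW : forall p q, 'Hom(W p, W q)) (h : forall p, 'Hom(V p, W p)) : Prop :=
  forall p q (v : V p), p \in A -> q \in A -> p <= q ->
    fW p q (h p v) = h q (fV p q v).

Definition mono_on (k : fieldType) d (P : porderType d) (A : pred P)
  (V W : P -> vectType k) (h : forall p, 'Hom(V p, W p)) : Prop :=
  forall p, p \in A -> lker (h p) == 0%VS.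

Arguments is_pmod_on {k d P} A V f.
Arguments middle_exact {k dS dT S T} M f.
Arguments nat_on {k d P} A V W fV fW h.
Arguments mono_on {k d P} A V W h.

(* Main.v *)
Require Import Defs.
From HB Require Import structures.
From mathcomp Require Import all_boot all_order all_algebra.
From mathcomp Require boolp classical_sets.
From Stdlib Require Import Classical_Prop.
Set Implicit Arguments. Unset Strict Implicit. Unset Printing Implicit Defensive.
Import Order.TTheory GRing.Theory.
Local Open Scope ring_scope.

Definition inA (k : fieldType) (V : vectType k) (a : (V * {vspace V})%type) (v : V) :=
  v - a.1 \in a.2.
Definition subA (k : fieldType) (V : vectType k) (a b : (V * {vspace V})%type) :=
  ((a.2 <= b.2)%VS && (a.1 - b.1 \in b.2)).

Lemma subA_in (k : fieldType) (V : vectType k) (a b : (V * {vspace V})%type) v :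
  subA a b -> inA a v -> inA b v.
Proof.
case/andP=> /subvP sab dab; rewrite /inA => va.
by rewrite -(subrK a.1 v) -addrA rpredD // sab.
Qed.

Lemma subA_refl (k : fieldType) (V : vectType k) (a : (V * {vspace V})%type) : subA a a.
Proof. by rewrite /subA subvv subrr rpred0. Qed.

Lemma subA_trans (k : fieldType) (V : vectType k) (a b c : (V * {vspace V})%type) :
  subA a b -> subA b c -> subA a c.
Proof.
move=> sab /andP[sbc dbc]; case/andP: (sab) => sab' dab.
rewrite /subA (subv_trans sab' sbc) /=.
by rewrite -(subrK b.1 a.1) -addrA rpredD // (subvP sbc).
Qed.

Lemma subA_dim (k : fieldType) (V : vectType k) (a b : (V * {vspace V})%type) :
  subA a b -> (\dim b.2 <= \dim a.2)%N -> subA b a.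
Proof.
case/andP=> sab dab dle.
have /eqP E : a.2 == b.2 by rewrite eqEdim sab.
by rewrite /subA E subvv /= -opprB rpredN.
Qed.

Lemma inA_sub (k : fieldType) (V : vectType k) (a : (V * {vspace V})%type) x y :
  inA a x -> inA a y -> x - y \in a.2.
Proof.
by move=> hx hy; rewrite -(subrK a.1 x) -(subrK a.1 y) opprD addrACA subrr addr0 rpredB.
Qed.

Lemma inA_pt (k : fieldType) (V : vectType k) (a : (V * {vspace V})%type) : inA a a.1.
Proof. by rewrite /inA subrr rpred0. Qed.

Lemma ex_min_nat (I : Type) (F : I -> Prop) (d : I -> nat) :
  (exists i, F i) -> exists i, F i /\ forall j, F j -> (d i <= d j)%N.
Proof.
move=> [i0 Fi0]; case: (classic (exists i, F i /\ forall j, F j -> (d i <= d j)%N)) => // H.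
exfalso.
have: forall n i, F i -> (n <= d i)%N.
  elim=> // n IH i Fi; rewrite ltn_neqAle IH // andbT; apply/eqP => E.
  by apply: H; exists i; split=> // j Fj; rewrite -E IH.
by move=> /(_ (d i0).+1 i0 Fi0); rewrite ltnn.
Qed.

Definition valid (k : fieldType) (P : Type) (le : P -> P -> Prop) (R : P -> Prop)
  (M : P -> vectType k) (f : forall p q, 'Hom(M p, M q))
  (base : forall p, (M p * {vspace M p})%type) (B : forall p, (M p * {vspace M p})%type) :=
  (forall p, R p -> subA (B p) (base p)) /\
  (forall p q v, R p -> R q -> le p q -> inA (B p) v -> inA (B q) (f p q v)).

Lemma select (k : fieldType) (P : Type) (le : P -> P -> Prop) (R : P -> Prop) (mn mx : P -> P -> P)
  (M : P -> vectType k) (f : forall p q, 'Hom(M p, M q))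
  (fid : forall p v, R p -> f p p v = v)
  (fcomp : forall p q r v, R p -> R q -> R r -> le p q -> le q r -> f p r v = f q r (f p q v))
  (letr : forall p q r, le p q -> le q r -> le p r)
  (mnP : forall p q, R p -> R q -> [/\ R (mn p q), le (mn p q) p & le (mn p q) q])
  (mxP : forall p q, R p -> R q -> [/\ R (mx p q), le p (mx p q) & le q (mx p q)])
  (mxl : forall p q z, le p z -> le q z -> le (mx p q) z)
  (mxpp : forall p, mx p p = p)
  (base : forall p, (M p * {vspace M p})%type)
  (baseP : forall p q v, R p -> R q -> le p q -> inA (base p) v -> inA (base q) (f p q v)) :
  exists g : forall p, M p, (forall p, R p -> inA (base p) (g p)) /\
     (forall p q, R p -> R q -> le p q -> f p q (g p) = g q).
Proof.
pose T := {B : forall p, (M p * {vspace M p})%type | valid le R f base B}.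
have base_valid : valid le R f base base by split=> // p _; exact: subA_refl.
pose t0 : T := exist _ base base_valid.
pose Rel := fun a b : T => boolp.asbool (forall p, R p -> subA (sval b p) (sval a p)).
have Rrefl : forall a, Rel a a by move=> a; apply/boolp.asboolP => p _; exact: subA_refl.
have Rtrans : forall a b c, Rel a b -> Rel b c -> Rel a c.
  move=> a b c /boolp.asboolP ab /boolp.asboolP bc; apply/boolp.asboolP => p Rp.
  exact: subA_trans (bc p Rp) (ab p Rp).
have t0_le : forall b, Rel t0 b.
  by move=> [B [HB1 HB2]]; apply/boolp.asboolP => p Rp /=; exact: HB1.
have chainUB : forall A : classical_sets.set T,
    classical_sets.total_on A (fun x y => Rel x y) -> exists t, forall s, A s -> Rel s t.
  move=> A Atot.
  pose F := fun B : T => A B \/ B = t0.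
  have Ftot : forall a b, F a -> F b -> Rel a b \/ Rel b a.
    move=> a b [Aa|->] [Ab|->]; [exact: Atot|by right|by left|by left].
  have minex : forall p, exists B, F B /\ forall B', F B' -> (\dim (sval B p).2 <= \dim (sval B' p).2)%N.
    move=> p; apply: (@ex_min_nat _ F (fun B => \dim (sval B p).2)).
    by exists t0; right.
  pose Bp := fun p => sval (boolp.cid (minex p)).
  have BpF : forall p, F (Bp p) by move=> p; case: (svalP (boolp.cid (minex p))).
  have key : forall p B', R p -> F B' -> subA (sval (Bp p) p) (sval B' p).
    move=> p B' Rp FB'.
    have [_ mn'] := svalP (boolp.cid (minex p)).
    case: (Ftot _ _ (BpF p) FB') => /boolp.asboolP H.
      exact: subA_dim (H p Rp) (mn' _ FB').
    exact: H p Rp.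
  pose U := fun p => sval (Bp p) p.
  have Uvalid : valid le R f base U.
    split.
      by move=> p Rp; case: (svalP (Bp p)) => H1 _; exact: H1.
    move=> p q v Rp Rq lpq Uv.
    have := key p (Bp q) Rp (BpF q) => /subA_in /(_ Uv) Hv.
    by case: (svalP (Bp q)) => _ H2; exact: H2.
  exists (exist _ U Uvalid) => s As; apply/boolp.asboolP => p Rp /=.
  by apply: key => //; left.
have [Bm maxBm] := @classical_sets.ZL_preorder T t0 Rel Rrefl Rtrans chainUB.
pose Bv := sval Bm.
have [Hv1 Hv2] : valid le R f base Bv := svalP Bm.
have lerefl : forall p, R p -> le p p.
  by move=> p Rp; case: (mxP p p Rp Rp) => _; rewrite mxpp.
have single : forall p0 v, R p0 -> inA (Bv p0) v -> v = (Bv p0).1.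
  move=> p0 v Rp0.
  pose I := fun r => (f r p0 (Bv r).1, (f r p0 @: (Bv r).2)%VS).
  have Imono : forall r' r, R r' -> R r -> le r' r -> le r p0 -> subA (I r') (I r).
    move=> r' r Rr' Rr lr'r lrp.
    have Rr'p : le r' p0 by exact: letr lr'r lrp.
    have d_in : f r' r (Bv r').1 - (Bv r).1 \in (Bv r).2.
      exact: (Hv2 r' r _ Rr' Rr lr'r (inA_pt _)).
    have u_in : forall u, u \in (Bv r').2 -> f r' r u \in (Bv r).2.
      move=> u uin.
      have : inA (Bv r') ((Bv r').1 + u) by rewrite /inA addrC addKr.
      move=> /(Hv2 r' r _ Rr' Rr lr'r); rewrite /inA linearD /= => H.
      have := rpredB H d_in.
      have -> : f r' r (Bv r').1 + f r' r u - (Bv r).1 - (f r' r (Bv r').1 - (Bv r).1) = f r' r u.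
        by rewrite opprB addrA subrK addrAC subrr add0r.
      done.
    apply/andP; split.
      apply/subvP => x /memv_imgP [u uin ->].
      by rewrite (fcomp r' r p0) //; apply: memv_img; exact: u_in.
    rewrite /= (fcomp r' r p0) // -linearB /=; exact: memv_img.
  have [rs [[Rrs lrs] rsmin]] := @ex_min_nat _ (fun r => R r /\ le r p0)
     (fun r => \dim (I r).2) (ex_intro _ p0 (conj Rp0 (lerefl p0 Rp0))).
  have Iall : forall r, R r -> le r p0 -> subA (I rs) (I r).
    move=> r Rr lr.
    have [Rm lmr lmrs] := mnP r rs Rr Rrs.
    have lmp : le (mn r rs) p0 by exact: letr lmr lr.
    have H1 := Imono _ _ Rm Rrs lmrs lrs.
    have H2 := subA_dim H1 (rsmin _ (conj Rm lmp)).
    exact: subA_trans H2 (Imono _ _ Rm Rr lmr lr).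
  pose c := (I rs).1.
  have wex : forall p, exists w, R p -> inA (Bv p) w /\ f p (mx p p0) w = f p0 (mx p p0) c.
    move=> p; case: (classic (R p)) => Rp; last by exists 0.
    have [Rr lrp lrrs] := mnP p rs Rp Rrs.
    have lrp0 : le (mn p rs) p0 by exact: letr lrrs lrs.
    have := subA_in (Iall _ Rr lrp0) (inA_pt (I rs)).
    rewrite /inA /= => /memv_imgP [u uin Eu].
    pose z := (Bv (mn p rs)).1 + u.
    have zin : inA (Bv (mn p rs)) z by rewrite /inA /z addrC addKr.
    have fz : f (mn p rs) p0 z = c by rewrite /z linearD /= -Eu addrC subrK.
    exists (f (mn p rs) p z) => _; split; first exact: Hv2.
    have [Rx lpx lp0x] := mxP p p0 Rp Rp0.
    by rewrite -(fcomp (mn p rs) p) // -fz -(fcomp (mn p rs) p0) //.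
  pose w := fun p => sval (boolp.cid (wex p)).
  have wP : forall p, R p -> inA (Bv p) (w p) /\ f p (mx p p0) (w p) = f p0 (mx p p0) c.
    by move=> p; exact: (svalP (boolp.cid (wex p))).
  pose B2 := fun p => (w p, ((Bv p).2 :&: lker (f p (mx p p0)))%VS).
  have B2sub : forall p, R p -> subA (B2 p) (Bv p).
    move=> p Rp; apply/andP; split; first exact: capvSl.
    by have [] := wP p Rp.
  have B2valid : valid le R f base B2.
    split; first by move=> p Rp; exact: subA_trans (B2sub p Rp) (Hv1 p Rp).
    move=> p q y Rp Rq lpq vin.
    have vBv : inA (Bv p) y := subA_in (B2sub p Rp) vin.
    have fvBv := Hv2 p q y Rp Rq lpq vBv.
    have [wq1 wq2] := wP q Rq.
    have [wp1 wp2] := wP p Rp.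
    move: vin; rewrite /inA /= memv_cap memv_ker linearB /= subr_eq0 => /andP[_ /eqP Ev].
    rewrite memv_cap inA_sub //= memv_ker linearB /= subr_eq0 wq2.
    have [Rxq lqxq lp0xq] := mxP q p0 Rq Rp0.
    have [Rxp lpxp lp0xp] := mxP p p0 Rp Rp0.
    have lxpxq : le (mx p p0) (mx q p0) by apply: mxl => //; exact: letr lpq lqxq.
    rewrite -(fcomp p q (mx q p0) y Rp Rq Rxq lpq lqxq).
    rewrite (fcomp p (mx p p0) (mx q p0)) // Ev wp2.
    by rewrite -(fcomp p0 (mx p p0) (mx q p0)).
  have relB : Rel Bm (exist _ B2 B2valid).
    by apply/boolp.asboolP => p Rp /=; exact: B2sub.
  have := maxBm _ relB => /boolp.asboolP /(_ p0 Rp0) /= sub.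
  suff Ec : forall x, inA (Bv p0) x -> x = c.
    by move=> vin; rewrite (Ec v vin) (Ec _ (inA_pt _)).
  move=> x /(subA_in sub); rewrite /inA /= memv_cap memv_ker linearB /= subr_eq0.
  case/andP=> _ /eqP.
  have [w1 w2] := wP p0 Rp0; rewrite w2.
  by rewrite mxpp !fid.
exists (fun p => (Bv p).1); split.
  by move=> p Rp; have /andP[] := Hv1 p Rp.
move=> p q Rp Rq lpq; apply: single => //.
exact: (Hv2 p q _ Rp Rq lpq (inA_pt _)).
Qed.

Definition combo (k : fieldType) (V : vectType k) (b : nat) (x : V) (v : 'rV[k]_b) : V :=
  \sum_(i < b) v 0 i *: x.

Fact combo_is_linear (k : fieldType) (V : vectType k) (b : nat) (x : V) :
  linear_for *:%R (@combo k V b x).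
Proof.
move=> a u v; rewrite /combo scaler_sumr -big_split /=.
by apply: eq_bigr => i _; rewrite !mxE scalerDl scalerA.
Qed.

HB.instance Definition _ (k : fieldType) (V : vectType k) (b : nat) (x : V) :=
  GRing.isLinear.Build k 'rV[k]_b V *:%R (@combo k V b x) (combo_is_linear x).

Lemma L1 (k : fieldType) (b : bool) : b -> (const_mx 1 : 'rV[k]_b) != 0.
Proof.
case: b => // _; apply/eqP => /matrixP /(_ 0 0); rewrite !mxE => /eqP.
by rewrite oner_eq0.
Qed.

Lemma L2 (k : fieldType) (b : bool) : ~~ b -> forall v : 'rV[k]_b, v = 0.
Proof. by case: b => // _ v; apply/matrixP => i []. Qed.

Lemma L3a (k : fieldType) (V : vectType k) (b1 b2 : bool) (x : V) (v : 'rV[k]_b1) :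
  b1 -> b2 -> combo x (v *m pid_mx (b1 && b2) : 'rV_b2) = combo x v.
Proof.
case: b1 v => // v _; case: b2 => // _.
by rewrite /= pid_mx_1 mulmx1.
Qed.

Lemma L6 (k : fieldType) (V W : vectType k) (b : nat) (x : V) (F : 'Hom(V, W)) (v : 'rV[k]_b) :
  F (combo x v) = combo (F x) v.
Proof. by rewrite /combo linear_sum; apply: eq_bigr => i _; rewrite linearZ. Qed.

Lemma L7 (k : fieldType) (V : vectType k) (b : nat) (v : 'rV[k]_b) :
  combo (0 : V) v = 0.
Proof. by rewrite /combo big1 // => i _; rewrite scaler0. Qed.

Lemma L4 (k : fieldType) (V : vectType k) (b : nat) (x : V) (i : 'I_b) :
  combo x (delta_mx 0 i) = x.
Proof.
rewrite /combo (bigD1 i) //= big1 ?addr0; first by rewrite mxE !eqxx scale1r.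
by move=> j ji; rewrite mxE eqxx /= (negbTE ji) scale0r.
Qed.

Lemma L5 (k : fieldType) (b : bool) (j : 'I_b) : delta_mx 0 j = const_mx 1 :> 'rV[k]_b.
Proof.
case: b j => [] j; last by case: j.
by apply/matrixP => a c; rewrite !mxE (ord1 a) (ord1 c) (ord1 j).
Qed.

Lemma L8 (k : fieldType) (V : vectType k) (b : bool) (x : V) :
  x != 0 -> forall v : 'rV[k]_b, combo x v = 0 -> v = 0.
Proof.
move=> nx; case: b => v; last by move=> _; exact: L2.
rewrite /combo big_ord1 => /eqP; rewrite scaler_eq0 (negbTE nx) orbF => /eqP E.
by apply/rowP => i; rewrite (ord1 i) E mxE.
Qed.

Lemma L9 (b : bool) (j : 'I_b) : b.
Proof. by case: b j => // [[]]. Qed.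

Lemma orNb' (b : bool) : b \/ ~~ b.
Proof. by case: b; [left|right]. Qed.

Lemma ivfE (k : fieldType) d (P : porderType d) (B : pred P) (p q : P) (v : ivV k B p) :
  ivf k B p q v = v *m pid_mx ((p \in B) && (q \in B)).
Proof. exact: (lfunE (mulmxr _) v). Qed.

Lemma wrap (k : fieldType) d (P : porderType d) (A1 A2 B1 B2 : pred P)
  (M : P -> vectType k) (f : forall p q, 'Hom(M p, M q))
  (h : forall p, 'Hom(ivV k B1 p, M p)) (g' : forall p, M p)
  (gi : forall p, p \in A2 -> p \in B2 -> g' p != 0)
  (gii : forall p q, p \in A2 -> q \in A2 -> (p <= q)%O -> p \in B2 -> q \in B2 -> f p q (g' p) = g' q)
  (giii : forall p q, p \in A2 -> q \in A2 -> (p <= q)%O -> p \in B2 -> q \notin B2 -> f p q (g' p) = 0)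
  (giv : forall p, p \in A1 -> p \in B1 -> g' p = h p (const_mx 1)) :
  exists g : forall p, 'Hom(ivV k B2 p, M p),
    [/\ nat_on A2 (ivV k B2) M (ivf k B2) f g, mono_on A2 (ivV k B2) M g &
        forall p, p \in A1 ->
          forall (i : 'I_(p \in B2)) (j : 'I_(p \in B1)),
            g p (delta_mx 0 i) = h p (delta_mx 0 j)].
Proof.
exists (fun p => (linfun (@combo k (M p) (p \in B2) (g' p)) : 'Hom(ivV k B2 p, M p))); split.
- move=> p q v Ap Aq lpq.
  case: (orNb' (p \in B2)) => Bp; last by rewrite (L2 Bp v) !linear0.
  rewrite !lfunE /= L6.
  case: (orNb' (q \in B2)) => Bq.
    by rewrite ivfE L3a // (gii p q).
  by rewrite (giii p q) // L7 (L2 Bq (ivf k B2 p q v)) linear0.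
- move=> p Ap; apply/lker0P => v w; rewrite !lfunE /=.
  case: (orNb' (p \in B2)) => Bp; last by rewrite (L2 Bp v) (L2 Bp w).
  move=> E; apply/eqP; rewrite -subr_eq0; apply/eqP; apply: (L8 (gi p Ap Bp)).
  by rewrite linearB /= E subrr.
- move=> p Ap i j.
  by rewrite !lfunE /= L4 L5 giv //; exact: L9 j.
Qed.

Local Open Scope order_scope.

Lemma part1core (k : fieldType) dS dT (S : orderType dS) (T : orderType dT)
  (M : S -> T -> vectType k) (f : forall x y x' y', 'Hom(M x y, M x' y'))
  (fid : forall x y v, f x y x y v = v)
  (fcomp : forall x y x1 y1 x2 y2 v, x <= x1 -> y <= y1 -> x1 <= x2 -> y1 <= y2 ->
     f x y x2 y2 v = f x1 y1 x2 y2 (f x y x1 y1 v))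
  (me : forall x x' y y', x <= x' -> y <= y' -> forall vb vc,
     (f x y' x' y' vb - f x' y x' y' vc = 0)%R ->
     exists va, f x y x y' va = vb /\ f x y x' y va = vc)
  (s : S) (J : pred T) (HJ : is_interval J) (u : T) (uJ : u \notin J)
  (uub : forall y, y \in J -> y <= u)
  (m : forall y, M s y) (m0 : forall y, y \in J -> m y != 0%R)
  (m1 : forall y y', y \in J -> y <= y' -> f s y s y' (m y) = if y' \in J then m y' else 0%R) :
  exists g : forall x y, M x y, [/\
    forall x y, x <= s -> y \in J -> g x y != 0%R,
    forall x y x' y', x <= s -> y \in J -> x' <= s -> y' \in J -> x <= x' -> y <= y' ->
      f x y x' y' (g x y) = g x' y',
    forall x y x' y', x <= s -> y \in J -> x' <= s -> y' \notin J -> x <= x' -> y <= y' ->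
      f x y x' y' (g x y) = 0%R &
    forall y, y \in J -> g s y = m y].
Proof.
have bex : forall x y, exists a : (M x y * {vspace M x y})%type, x <= s -> y \in J ->
    forall v, inA a v <-> (f x y s y v = m y /\
       forall y', y <= y' -> y' \notin J -> f x y x y' v = 0%R).
  move=> x y; case: (classic (x <= s /\ y \in J)); last first.
    by move=> H; exists (0%R, 0%VS) => xs yJ; exfalso; exact: H.
  case=> xs yJ.
  have [ys [[lys ysJ] ysmin]] := @ex_min_nat _ (fun y' => y <= y' /\ y' \notin J)
     (fun y' => \dim (lker (f x y x y'))) (ex_intro _ u (conj (uub y yJ) uJ)).
  have kerall : forall y', y <= y' -> y' \notin J -> (lker (f x y x ys) <= lker (f x y x y'))%VS.
    move=> y' ly' y'J; case/orP: (le_total ys y') => H.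
      apply/subvP => v; rewrite !memv_ker => /eqP E.
      by rewrite (fcomp x y x ys x y' v (lexx x) lys (lexx x) H) E linear0.
    have sub : (lker (f x y x y') <= lker (f x y x ys))%VS.
      apply/subvP => v; rewrite !memv_ker => /eqP E.
      by rewrite (fcomp x y x y' x ys) // E linear0.
    have /eqP <- // : lker (f x y x y') == lker (f x y x ys).
    by rewrite eqEdim sub ysmin.
  have [va [va1 va2]] : exists va, f x y x ys va = 0%R /\ f x y s y va = m y.
    apply: me => //.
    by rewrite linear0 (m1 y ys) // (negbTE ysJ) subrr.
  exists (va, (lker (f x y s y) :&: lker (f x y x ys))%VS) => _ _ v.
  rewrite /inA /= memv_cap !memv_ker !linearB /= va1 va2 subr0 subr_eq0.
  split.
    case/andP=> /eqP -> /eqP E; split=> // y' ly' y'J.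
    by have /subvP /(_ v) := kerall y' ly' y'J; rewrite !memv_ker E eqxx => /(_ isT) /eqP.
  by case=> -> H; rewrite eqxx (H ys lys ysJ) eqxx.
pose base := fun p : S * T => sval (boolp.cid (bex p.1 p.2)).
have baseE : forall x y, x <= s -> y \in J -> forall v, inA (base (x, y)) v <->
    (f x y s y v = m y /\ forall y', y <= y' -> y' \notin J -> f x y x y' v = 0%R).
  by move=> x y; exact: (svalP (boolp.cid (bex x y))).
have := @select k (S * T)%type (fun p q => p.1 <= q.1 /\ p.2 <= q.2)
  (fun p => p.1 <= s /\ p.2 \in J)
  (fun p q => (Order.min p.1 q.1, Order.min p.2 q.2))
  (fun p q => (Order.max p.1 q.1, Order.max p.2 q.2))
  (fun p => M p.1 p.2) (fun p q => f p.1 p.2 q.1 q.2).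
move=> SEL.
have [g [gbase gcomp]] : exists g : forall p : S * T, M p.1 p.2,
   (forall p, p.1 <= s /\ p.2 \in J -> inA (base p) (g p)) /\
   (forall p q, p.1 <= s /\ p.2 \in J -> q.1 <= s /\ q.2 \in J -> p.1 <= q.1 /\ p.2 <= q.2 ->
      f p.1 p.2 q.1 q.2 (g p) = g q).
  apply: SEL.
- by move=> [x y] v _; exact: fid.
- move=> [x y] [x1 y1] [x2 y2] v _ _ _ [/= l1 l2] [/= l3 l4]; exact: fcomp.
- move=> p q r [l1 l2] [l3 l4]; split; [exact: le_trans l3|exact: le_trans l4].
- move=> [x y] [x1 y1] [/= xs yJ] [/= x1s y1J]; split => /=.
  + split; first by rewrite ge_min xs.
    by rewrite minEle; case: ifP.
  + by split; rewrite ge_min lexx.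
  + by split; rewrite ge_min lexx orbT.
- move=> [x y] [x1 y1] [/= xs yJ] [/= x1s y1J]; split => /=.
  + split; first by rewrite ge_max xs.
    by rewrite maxEle; case: ifP.
  + by split; rewrite le_max lexx.
  + by split; rewrite le_max lexx orbT.
- move=> p q z [l1 l2] [l3 l4] /=; by rewrite !ge_max l1 l2 l3 l4.
- by move=> [x y] /=; rewrite !maxxx.
- move=> [x y] [x' y'] v [/= xs yJ] [/= x's y'J] [/= lx ly].
  rewrite (baseE _ _ xs yJ) (baseE _ _ x's y'J) => -[E1 E2]; split.
    rewrite -(fcomp x y x' y' s y' v lx ly x's (lexx y')).
    by rewrite (fcomp x y s y s y' v xs (lexx y) (lexx s) ly) E1 m1 ?y'J.
  move=> y'' ly'' y''J.
  rewrite -(fcomp x y x' y' x' y'' v lx ly (lexx x') ly'').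
  rewrite (fcomp x y x y'' x' y'' v (lexx x) (le_trans ly ly'') lx (lexx y'')).
  by rewrite E2 ?linear0 // (le_trans ly ly'').
exists (fun x y => g (x, y)); split.
- move=> x y xs yJ; have /(baseE _ _ xs yJ) [E1 _] := gbase (x, y) (conj xs yJ).
  apply/eqP => g0; move: E1; rewrite /= g0 linear0 => /esym /eqP; apply/negP; exact: m0.
- move=> x y x' y' xs yJ x's y'J lx ly.
  exact: (gcomp (x, y) (x', y') (conj xs yJ) (conj x's y'J) (conj lx ly)).
- move=> x y x' y' xs yJ x's y'J lx ly.
  have /(baseE _ _ xs yJ) [_ E2] := gbase (x, y) (conj xs yJ).
  by rewrite /= (fcomp x y x y' x' y') ?lexx // E2 ?linear0.
- move=> y yJ; have /(baseE _ _ (lexx s) yJ) [E1 _] := gbase (s, y) (conj (lexx s) yJ).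
  by rewrite -E1 fid.
Qed.

Lemma L10 (k : fieldType) (b1 b2 : bool) : b1 -> b2 ->
  (const_mx 1 : 'rV[k]_b1) *m pid_mx (b1 && b2) = const_mx 1 :> 'rV[k]_b2.
Proof. by case: b1 => //; case: b2 => // _ _; rewrite /= pid_mx_1 mulmx1. Qed.

Theorem lemma5p4 (k : fieldType) dS dT (S : orderType dS) (T : orderType dT)
  (M : S *p T -> vectType k) (f : forall p q : S *p T, 'Hom(M p, M q))
  (HM : is_pmod_on predT M f) (Hme : middle_exact M f)
  (s : S) (t : T) (JS : pred S) (JT : pred T)
  (HJS : is_interval JS) (HJT : is_interval JT) :
  (* (1) *)
  ((exists u : T, u \notin JT /\ forall y, y \in JT -> y <= u) ->
   let A1 := [pred p : S *p T | p.1 == s] in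
   let B1 := [pred p : S *p T | (p.1 == s) && (p.2 \in JT)] in
   let A2 := [pred p : S *p T | p.1 <= s] in
   let B2 := [pred p : S *p T | (p.1 <= s) && (p.2 \in JT)] in
   forall h : forall p, 'Hom(ivV k B1 p, M p),
     nat_on A1 (ivV k B1) M (ivf k B1) f h -> mono_on A1 (ivV k B1) M h ->
     exists g : forall p, 'Hom(ivV k B2 p, M p),
       [/\ nat_on A2 (ivV k B2) M (ivf k B2) f g, mono_on A2 (ivV k B2) M g &
           forall p, p \in A1 ->
             forall (i : 'I_(p \in B2)) (j : 'I_(p \in B1)),
               g p (delta_mx 0 i) = h p (delta_mx 0 j)]) /\
  (* (2) *)
  ((exists u : S, u \notin JS /\ forall x, x \in JS -> x <= u) ->
   let A1 := [pred p : S *p T | p.2 == t] in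
   let B1 := [pred p : S *p T | (p.1 \in JS) && (p.2 == t)] in
   let A2 := [pred p : S *p T | p.2 <= t] in
   let B2 := [pred p : S *p T | (p.1 \in JS) && (p.2 <= t)] in
   forall h : forall p, 'Hom(ivV k B1 p, M p),
     nat_on A1 (ivV k B1) M (ivf k B1) f h -> mono_on A1 (ivV k B1) M h ->
     exists g : forall p, 'Hom(ivV k B2 p, M p),
       [/\ nat_on A2 (ivV k B2) M (ivf k B2) f g, mono_on A2 (ivV k B2) M g &
           forall p, p \in A1 ->
             forall (i : 'I_(p \in B2)) (j : 'I_(p \in B1)),
               g p (delta_mx 0 i) = h p (delta_mx 0 j)]).
Proof.
case: HM => Hid Hcomp.
have fid : forall p v, f p p v = v by move=> p v; exact: Hid.
have fcomp : forall p q r v, p <= q -> q <= r -> f p r v = f q r (f p q v).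
  by move=> p q r v; exact: Hcomp.
split.
- move=> [u [uJ uub]] A1 B1 A2 B2 h hnat hmono.
  have hinj : forall y, y \in JT -> forall v w, h (s, y) v = h (s, y) w -> v = w.
    by move=> y _; apply/lker0P; apply: hmono; rewrite inE /= eqxx.
  have m0 : forall y, y \in JT -> h (s, y) (const_mx 1) != 0%R.
    move=> y yJ; apply/eqP => E.
    have : h (s, y) (const_mx 1) = h (s, y) 0%R by rewrite E linear0.
    move=> /(hinj y yJ) /eqP; apply/negP; apply: L1; by rewrite inE /= eqxx.
  have m1 : forall y y', y \in JT -> y <= y' -> f (s, y) (s, y') (h (s, y) (const_mx 1)) =
      if y' \in JT then h (s, y') (const_mx 1) else 0%R.
    move=> y y' yJ ly.
    have lsy : ((s, y) : S *p T) <= (s, y') by rewrite leEprod /= lexx.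
    have a1 : (s, y) \in A1 by rewrite inE /= eqxx.
    have a2 : (s, y') \in A1 by rewrite inE /= eqxx.
    rewrite (hnat (s, y) (s, y') _ a1 a2 lsy).
    rewrite ivfE.
    case: (orNb' (y' \in JT)) => y'J.
      by rewrite y'J L10 // inE /= eqxx.
    rewrite (negbTE y'J) (L2 _ (_ *m _)) ?linear0 //.
    by rewrite inE /= negb_and y'J orbT.
  have [g [gnz gcomp gvan gcol]] := @part1core k dS dT S T (fun x y => M (x, y))
    (fun x y x' y' => f (x, y) (x', y'))
    (fun x y v => fid (x, y) v)
    (fun x y x1 y1 x2 y2 v l1 l2 l3 l4 =>
       fcomp (x, y) (x1, y1) (x2, y2) v (introT andP (conj l1 l2)) (introT andP (conj l3 l4)))
    (fun x x' y y' lx ly vb vc E => proj2 (Hme x x' y y' lx ly) vb vc E)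
    s JT HJT u uJ uub (fun y => h (s, y) (const_mx 1)) m0 m1.
  apply: (wrap (g' := fun p : S *p T => match p as p0 return M p0 with (x, y) => g x y end)).
  + by move=> [x y]; rewrite !inE /= => xs /andP[_ yJ]; exact: gnz.
  + move=> [x y] [x' y']; rewrite !inE /= => xs x's /andP[lx ly] /andP[_ yJ] /andP[_ y'J].
      exact: gcomp.
  + move=> [x y] [x' y']; rewrite !inE /= => xs x's /andP[lx ly] /andP[_ yJ].
      rewrite x's /= => y'J; exact: gvan.
  + move=> [x y]; rewrite !inE /= => /eqP xs; subst x => /andP[_ yJ]; exact: gcol.
- move=> [u [uJ uub]] A1 B1 A2 B2 h hnat hmono.
  have hinj : forall x, x \in JS -> forall v w, h (x, t) v = h (x, t) w -> v = w.
    by move=> x _; apply/lker0P; apply: hmono; rewrite inE /= eqxx.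
  have m0 : forall x, x \in JS -> h (x, t) (const_mx 1) != 0%R.
    move=> x xJ; apply/eqP => E.
    have : h (x, t) (const_mx 1) = h (x, t) 0%R by rewrite E linear0.
    move=> /(hinj x xJ) /eqP; apply/negP; apply: L1; by rewrite inE /= eqxx andbT.
  have m1 : forall x x', x \in JS -> x <= x' -> f (x, t) (x', t) (h (x, t) (const_mx 1)) =
      if x' \in JS then h (x', t) (const_mx 1) else 0%R.
    move=> x x' xJ lx.
    have lsy : ((x, t) : S *p T) <= (x', t) by rewrite leEprod /= lexx andbT.
    have a1 : (x, t) \in A1 by rewrite inE /= eqxx.
    have a2 : (x', t) \in A1 by rewrite inE /= eqxx.
    rewrite (hnat (x, t) (x', t) _ a1 a2 lsy).
    rewrite ivfE.
    case: (orNb' (x' \in JS)) => x'J.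
      by rewrite x'J L10 // inE /= eqxx ?andbT.
    rewrite (negbTE x'J) (L2 _ (_ *m _)) ?linear0 //.
    by rewrite inE /= negb_and x'J.
  have [g [gnz gcomp gvan gcol]] := @part1core k dT dS T S (fun y x => M (x, y))
    (fun y x y' x' => f (x, y) (x', y'))
    (fun y x v => fid (x, y) v)
    (fun y x y1 x1 y2 x2 v l1 l2 l3 l4 =>
       fcomp (x, y) (x1, y1) (x2, y2) v (introT andP (conj l2 l1)) (introT andP (conj l4 l3)))
    (fun y y' x x' ly lx vb vc E =>
       let: ex_intro va (conj e1 e2) := proj2 (Hme x x' y y' lx ly) vc vb
          (etrans (esym (opprB _ _)) (etrans (congr1 -%R E) (oppr0 _))) in
       ex_intro _ va (conj e2 e1))
    t JS HJS u uJ uub (fun x => h (x, t) (const_mx 1)) m0 m1.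
  apply: (wrap (g' := fun p : S *p T => match p as p0 return M p0 with (x, y) => g y x end)).
  + by move=> [x y]; rewrite !inE /= => yt /andP[xJ _]; exact: gnz.
  + move=> [x y] [x' y']; rewrite !inE /= => yt y't /andP[lx ly] /andP[xJ _] /andP[x'J _].
      exact: gcomp.
  + move=> [x y] [x' y']; rewrite !inE /= => yt y't /andP[lx ly] /andP[xJ _].
      rewrite y't andbT => x'J; exact: gvan.
  + move=> [x y]; rewrite !inE /= => /eqP yt; subst y => /andP[xJ _]; exact: gcol.
Qed.
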